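(* Let $T$ be an $n$-node tree, $k\ge 2$ an integer, and apply the Rake-and-Compress algorithm with parameter $k$ to $T$. Let $R$ be the set of raked nodes (the union of all rake layers $R_i$). Then every connected component of the induced subgraph $T[R]$ has diameter at most $4(\log_k n+1)+2$.
   Context: Rake-and-Compress algorithm on a tree $T$ with parameter $k\ge 2$: set $V_0=V(T)$; for $i=1,2,\dots,\lceil\log_k n+1\rceil$: (1) let $C_i$ be the set of nodes $u\in V_{i-1}$ such that $u$ and all neighbors of $u$ have degree at most $k$ in $T[V_{i-1}]$ (compress); (2) let $R_i$ be the set of nodes $u\in V_{i-1}\setminus C_i$ with degree at most $1$ in $T[V_{i-1}\setminus C_i]$ (rake); (3) set $V_i=V_{i-1}\setminus(C_i\cup R_i)$. It is known (Chang–Pettie) that every node lies in some $C_i$ or $R_i$. The layers are totally ordered by the time of marking: $C_1<R_1<C_2<R_2<\dots$; node $u$ is lower than node $v$ if $u$'s layer is lower, or they share a layer and $u$ has smaller ID. *)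

(* Defs.v *)
From Stdlib Require Import Reals.
From mathcomp Require Import all_boot.

Set Implicit Arguments.
Unset Strict Implicit.
Unset Printing Implicit Defensive.

Section RakeCompress.
Variable V : finType.
Variable e : rel V.

Definition simple_graph : Prop := symmetric e /\ irreflexive e.

(* a tree: nonempty, connected, with exactly #|V| - 1 (undirected) edges;
   the directed edge count is twice the undirected one. *)
Definition is_tree : Prop :=
  [/\ simple_graph, 0 < #|V|, (forall x y, connect e x y)
    & #|[set p : V * V | e p.1 p.2]| = 2 * (#|V| - 1)].

Definition deg_in (S : {set V}) (u : V) : nat := #|[set v in S | e u v]|.

Definition compress_set (k : nat) (S : {set V}) : {set V} :=
  [set u in S | (deg_in S u <= k) && [forall v in S, e u v ==> (deg_in S v <= k)]].

Definition rake_set (k : nat) (S : {set V}) : {set V} :=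
  let S' := S :\: compress_set k S in
  [set u in S' | deg_in S' u <= 1].

Definition rc_step (k : nat) (S : {set V}) : {set V} :=
  S :\: (compress_set k S :|: rake_set k S).

Definition rc_V (k i : nat) : {set V} := iter i (rc_step k) setT.

(* number of rounds ceil(log_k n + 1) = ceil(log_k n) + 1 = up_log k n + 1 *)
Definition rc_rounds (k : nat) : nat := (up_log k #|V|).+1.

(* R = union of the rake layers R_1, ..., R_L, where R_{i+1} = rake_set k V_i *)
Definition raked (k : nat) : {set V} :=
  \bigcup_(i < rc_rounds k) rake_set k (rc_V k i).

Definition induced_rel (S : {set V}) : rel V :=
  [rel x y | [&& e x y, x \in S & y \in S]].

End RakeCompress.

(* Main.v *)
Require Import Defs.
From Stdlib Require Import Reals Lra.
From mathcomp Require Import all_boot.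
From mathcomp Require Import zify.
Set Implicit Arguments.
Unset Strict Implicit.

Lemma natpowE k e : Nat.pow k e = k ^ e.
Proof. by elim: e => //= e IH; rewrite expnS IH mulnE. Qed.

Section RB.
Local Open Scope R_scope.
Lemma real_bound (n k m : nat) : (0 < n)%N -> (1 < k)%N -> (m <= (up_log k n).*2.+1)%N ->
  INR m <= 4*(ln (INR n)/ln (INR k) + 1) + 2.
Proof.
move=> n0 k1 hm.
have k1R : 1 < INR k by apply: (lt_INR 1); apply/ltP.
have n1R : 1 <= INR n by apply: (le_INR 1); apply/leP.
have lk : 0 < ln (INR k) by rewrite -ln_1; apply: ln_increasing; lra.
have ln0 : 0 <= ln (INR n).
  case: (Rle_lt_or_eq_dec _ _ n1R) => h.
    by rewrite -ln_1; left; apply: ln_increasing; lra.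
  by rewrite -h ln_1; lra.
have L0 : 0 <= ln (INR n) / ln (INR k).
  by apply: Rmult_le_pos => //; left; apply: Rinv_0_lt_compat.
have He : INR (up_log k n) <= ln (INR n) / ln (INR k) + 1.
  case E: (up_log k n) => [|e]; first by rewrite /=; lra.
  have n1 : (1 < n)%N by have := up_log_gt0 k n; rewrite E k1 /= => <-.
  have h := up_log_gtn k1 n1; rewrite E /= in h.
  have hR : INR k ^ e < INR n.
    by rewrite -pow_INR; apply: lt_INR; apply/ltP; rewrite natpowE.
  have hl : INR e * ln (INR k) < ln (INR n).
    rewrite -ln_pow; last lra.
    apply: ln_increasing => //. apply: pow_lt. lra.
  have : INR e < ln (INR n) / ln (INR k).
    apply: (Rmult_lt_reg_r (ln (INR k))) => //.
    have -> : ln (INR n) / ln (INR k) * ln (INR k) = ln (INR n) by field; lra.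
    done.
  rewrite S_INR; lra.
have hmR : INR m <= 2 * INR (up_log k n) + 1.
  have := le_INR _ _ (leP hm). rewrite S_INR -addnn plus_INR. lra.
lra.
Qed.
End RB.

Fixpoint nlm (s : seq nat) : bool :=
  match s with
  | a :: t => match t with
              | b :: c :: _ => ((a < b) || (c < b)) && nlm t
              | _ => true
              end
  | _ => true
  end.

Lemma nlm_tail a s : nlm (a :: s) -> nlm s.
Proof. by case: s => [|b [|c s]] //= /andP[]. Qed.

Lemma nlm_dec s a b : nlm (a :: b :: s) -> b < a -> size (b :: s) <= a.
Proof.
elim: s a b => [|c s IH] a b /=; first by move=> _; lia.
move=> /andP[/orP[hab|hcb] hn] hba; first by lia.
have := IH b c hn hcb => /=; lia.
Qed.

Lemma nlm_inc L s a : nlm (a :: s) -> all (fun x => x < L) (a :: s) ->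
  size (a :: s) + a <= 2 * L.
Proof.
elim: s a => [|b s IH] a hn hall0.
  by move: hall0 => /=; rewrite andbT /=; lia.
move: hall0 => /= /andP[haL /andP[hbL hall]].
case: (ltngtP a b) => hab.
- have := IH b (nlm_tail hn); rewrite /= hbL hall => /(_ isT); lia.
- have := nlm_dec hn hab => /=; lia.
- subst b; case: s hn hall {IH} => [|c s] hn hall /=; first by lia.
  move: hn => /= /andP[/orP[|hc] hn]; first by lia.
  have := nlm_dec hn hc => /=; lia.
Qed.

Section G.
Variable V : finType.
Variable e : rel V.
Variable k : nat.
Hypothesis esym : symmetric e.

Let R i := rake_set e k (rc_V e k i).
Let L := rc_rounds V k.

Lemma rc_V_S i : rc_V e k i.+1 = rc_step e k (rc_V e k i).
Proof. by rewrite /rc_V iterS. Qed.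

Lemma rc_V_mono i j : i <= j -> rc_V e k j \subset rc_V e k i.
Proof.
move=> /subnK <-; elim: (j - i) => [|d IH]; first by rewrite add0n.
by rewrite addSn rc_V_S; apply: subset_trans IH; rewrite /rc_step subsetDl.
Qed.

Lemma R_up i j y : i <= j -> y \in R j ->
  y \in rc_V e k i :\: compress_set e k (rc_V e k i).
Proof.
move=> hij hy.
have hy' : y \in rc_V e k j :\: compress_set e k (rc_V e k j).
  by move: hy; rewrite /R /rake_set inE => /andP[].
case: (ltngtP i j) hij => // hlt _.
- move: hy'; rewrite inE => /andP[_ hyV].
  have := subsetP (rc_V_mono hlt) y hyV.
  rewrite rc_V_S /rc_step in_setD in_setU negb_or => /andP[/andP[hC _] hyi].
  by rewrite in_setD hC hyi.
- by subst.
Qed.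

Lemma one_up i x y z jy jz : x \in R i -> e x y -> e x z ->
  y \in R jy -> z \in R jz -> i <= jy -> i <= jz -> y = z.
Proof.
move=> hx exy exz hy hz hiy hiz.
apply/eqP; apply/negPn/negP => hne.
move: hx; rewrite /R /rake_set inE => /andP[_ hdeg].
set S' := rc_V e k i :\: compress_set e k (rc_V e k i) in hdeg.
have hsub : [set y; z] \subset [set v in S' | e x v].
  apply/subsetP => w; rewrite in_set2 => /orP[]/eqP->; rewrite in_set.
  - by rewrite exy (R_up hiy hy).
  - by rewrite exz (R_up hiz hz).
have := subset_leq_card hsub; rewrite cards2 hne.
rewrite /deg_in in hdeg; lia.
Qed.

Definition layer (x : V) := find (fun i => x \in R i) (iota 0 L).

Lemma layerP x : x \in raked e k -> layer x < L /\ x \in R (layer x).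
Proof.
move=> /bigcupP[i _ hi].
have hh : has (fun i => x \in R i) (iota 0 L).
  by apply/hasP; exists (nat_of_ord i) => //; rewrite mem_iota /= ltn_ord.
have hlt : layer x < L by rewrite /layer -[X in _ < X](size_iota 0 L) -has_find.
split=> //; have := nth_find 0 hh; rewrite -/(layer x) nth_iota //.
Qed.

Let ir := induced_rel e (raked e k).

Lemma path_nlm x p : path ir x p -> uniq (x :: p) -> nlm (map layer (x :: p)).
Proof.
elim: p x => [|y p IH] x //=.
move=> /andP[hxy hp] /andP[hxn hu].
have {}IH := IH y hp hu.
case: p hp hu IH hxn => [|z p] //= hp hu IH hxn.
rewrite IH andbT.
apply/negPn/negP; rewrite negb_or -!leqNgt => /andP[h1 h2].
move: hxy hp; rewrite /ir /= => /and3P[exy hxR hyR] /andP[/and3P[eyz _ hzR] _].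
have [_ hyl] := layerP hyR.
have [_ hxl] := layerP hxR.
have [_ hzl] := layerP hzR.
have exz : x = z.
  by apply: (one_up hyl _ eyz hxl hzl h1 h2); rewrite esym.
by move: hxn; rewrite exz !inE eqxx orbT.
Qed.

Lemma path_all x p : path ir x p -> all (fun y => y \in raked e k) p.
Proof.
elim: p x => [|y p IH] x //= /andP[/and3P[_ _ hy] hp].
by rewrite hy (IH y hp).
Qed.

End G.

Theorem mainTheorem5 (V : finType) (e : rel V) (k : nat) :
  is_tree e -> 2 <= k ->
  forall u v : V, u \in raked e k -> v \in raked e k ->
  connect (induced_rel e (raked e k)) u v ->
  exists p : seq V,
    [/\ path (induced_rel e (raked e k)) u p, last u p = v &
        Rle (INR (size p))
          (Rplus (Rmult (INR 4) (Rplus (Rdiv (ln (INR #|V|)) (ln (INR k))) (INR 1))) (INR 2))].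
Proof.
move=> [[esym _] n0 _ _] k2 u v hu hv /connectP[p0 hp0 ->].
case: (shortenP hp0) => p hp hup _.
exists p; split => //.
have hall : all (fun x => x < rc_rounds V k) (map (layer e k) (u :: p)).
  apply/allP => l /mapP[x hx ->].
  have hxR : x \in raked e k.
    by move: hx; rewrite inE => /orP[/eqP->//|]; apply: (allP (path_all hp)).
  by have [] := layerP hxR.
have := nlm_inc (path_nlm esym hp hup) hall.
rewrite /= size_map /rc_rounds => hsz.
have hm : size p <= (up_log k #|V|).*2.+1.
  move: hsz; rewrite -addnn; move: (size p) (layer e k u) (up_log k #|V|) => a b c; lia.
have := real_bound n0 k2 hm.
simpl; lra.
Qed.
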